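(* Let $R$ be a ring and $(\mathcal{K},\mathcal{L})$ a complete hereditary cotorsion pair of $R$-modules such that every projective module lies in $\mathcal{L}$ and $\mathcal{L}$ is closed under kernels of epimorphisms. The following are equivalent for an $R$-module $M$: (i) $M\in\mathcal{L}$; (ii) $\mathfrak{L}\text{-}\mathrm{Hom}_R(K,M)=0$ for all $K\in\mathcal{K}$; (iii) there exists a short exact sequence $0\to L\to K\xrightarrow{q}M\to0$ with $L\in\mathcal{L}$, $K\in\mathcal{K}$, such that $[q]=[0]$ in $\mathfrak{L}\text{-}\mathrm{Hom}_R(K,M)$.
   Context: Modules are left $R$-modules. $(\mathcal{K},\mathcal{L})$ is a cotorsion pair if $\mathcal{L}=\{X:\mathrm{Ext}^1_R(K,X)=0\ \forall K\in\mathcal{K}\}$ and $\mathcal{K}=\{X:\mathrm{Ext}^1_R(X,L)=0\ \forall L\in\mathcal{L}\}$; complete if every module $M$ has exact sequences $0\to L\to K\to M\to0$ and $0\to M\to L'\to K'\to0$ with $K,K'\in\mathcal{K}$, $L,L'\in\mathcal{L}$; hereditary if $\mathrm{Ext}^i_R(K,L)=0$ for all $i>0$, $K\in\mathcal{K}$, $L\in\mathcal{L}$. $\mathfrak{L}\text{-}\mathrm{Hom}_R(X,Y)$ is $\mathrm{Hom}_R(X,Y)$ modulo the subgroup of maps factoring through a module in $\mathcal{L}$, and $[h]$ the class of $h$. *)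

(* Defs.v *)
From HB Require Import structures.
From mathcomp Require Import all_boot all_algebra.
Set Implicit Arguments. Unset Strict Implicit. Unset Printing Implicit Defensive.
Import GRing.Theory.
Local Open Scope ring_scope.

Section Defs.
Variable R : nzRingType.

Definition surj (A B : Type) (f : A -> B) := forall y, exists x, f x = y.

Definition exact_at (A B C : lmodType R) (f : A -> B) (g : B -> C) :=
  forall y, g y = 0 <-> exists x, f x = y.

Definition short_exact (A B C : lmodType R) (f : A -> B) (g : B -> C) :=
  injective f /\ exact_at f g /\ surj g.

Definition projective (P : lmodType R) :=
  forall (A B : lmodType R) (g : {linear A -> B}) (f : {linear P -> B}),
    surj g -> exists h : {linear P -> A}, forall x, g (h x) = f x.

Record proj_resolution (K : lmodType R) := ProjResolution {
  pr_obj : nat -> lmodType R;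
  pr_d : forall n, {linear pr_obj n.+1 -> pr_obj n};
  pr_eps : {linear pr_obj 0 -> K};
  pr_proj : forall n, projective (pr_obj n);
  pr_eps_surj : surj pr_eps;
  pr_exact0 : exact_at (pr_d 0) pr_eps;
  pr_exact : forall n, exact_at (pr_d n.+1) (pr_d n) }.

(* Ext^i_R(K, X) = 0, with Ext computed as the cohomology of Hom_R(P_., X)
   for a projective resolution P of K (independent of the resolution; we
   require vanishing for every projective resolution). *)
Definition Ext_vanishes (i : nat) (K X : lmodType R) : Prop :=
  forall P : proj_resolution K,
  match i with
  | 0 => forall f : {linear pr_obj P 0 -> X},
           (forall x, f (pr_d P 0 x) = 0) -> forall x, f x = 0
  | m.+1 => forall f : {linear pr_obj P m.+1 -> X},
           (forall x, f (pr_d P m.+1 x) = 0) ->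
           exists g : {linear pr_obj P m -> X}, forall x, f x = g (pr_d P m x)
  end.

Definition mclass := lmodType R -> Prop.

Definition cotorsion_pair (Kc Lc : mclass) :=
  (forall X, Lc X <-> forall K, Kc K -> Ext_vanishes 1 K X) /\
  (forall X, Kc X <-> forall L, Lc L -> Ext_vanishes 1 X L).

Definition complete_pair (Kc Lc : mclass) :=
  forall M : lmodType R,
  (exists (L K : lmodType R) (f : {linear L -> K}) (g : {linear K -> M}),
      [/\ Lc L, Kc K & short_exact f g]) /\
  (exists (L' K' : lmodType R) (f : {linear M -> L'}) (g : {linear L' -> K'}),
      [/\ Lc L', Kc K' & short_exact f g]).

Definition hereditary_pair (Kc Lc : mclass) :=
  forall i, (0 < i)%N -> forall K L, Kc K -> Lc L -> Ext_vanishes i K L.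

Definition closed_ker_epi (Lc : mclass) :=
  forall (A B C : lmodType R) (f : {linear A -> B}) (g : {linear B -> C}),
    short_exact f g -> Lc B -> Lc C -> Lc A.

(* [h] = [0] in L-Hom_R(X, Y): h factors through a module of Lc *)
Definition factors_through_class (Lc : mclass) (X Y : lmodType R)
  (h : {linear X -> Y}) :=
  exists (N : lmodType R) (a : {linear X -> N}) (b : {linear N -> Y}),
    Lc N /\ forall x, h x = b (a x).

Definition LHom_zero (Lc : mclass) (X Y : lmodType R) :=
  forall h : {linear X -> Y}, factors_through_class Lc h.

End Defs.

(* Main.v *)
Require Import Defs.
From HB Require Import structures.
From mathcomp Require Import all_boot all_algebra.
From Stdlib Require Import ClassicalEpsilon.
Import GRing.Theory.

Section Aux.
Local Open Scope ring_scope.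
Variable R : nzRingType.

Definition mkLin (U V : lmodType R) (f : U -> V) (H : linear f) : {linear U -> V} :=
  HB.pack f (GRing.isLinear.Build R U V *:%R f H).
Arguments mkLin {U V f}.

Lemma linear_comp (U V W : lmodType R) (f : {linear U -> V}) (g : {linear V -> W}) :
  linear (fun x => g (f x)).
Proof. by move=> a x y /=; rewrite !linearP. Qed.

Lemma linear_sub (U V : lmodType R) (f g : {linear U -> V}) :
  linear (fun x => f x - g x).
Proof. move=> a x y /=; by rewrite (linearP f) (linearP g) scalerBr opprD addrACA. Qed.

Arguments linear_comp {U V W}.
Arguments linear_sub {U V}.
Lemma linear_id (U : lmodType R) : linear (fun x : U => x).
Proof. by []. Qed.

Lemma d_comp (K : lmodType R) (P : proj_resolution K) n x :
  pr_d P n (pr_d P n.+1 x) = 0.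
Proof. by apply (proj2 (@pr_exact _ _ P n _)); exists x. Qed.

Lemma key (Kc Lc : mclass R) :
  cotorsion_pair Kc Lc -> hereditary_pair Kc Lc ->
  forall (M L K : lmodType R) (f : {linear L -> K}) (q : {linear K -> M}),
  Lc L -> short_exact f q -> factors_through_class Lc q ->
  forall X, Kc X -> Ext_vanishes 1 X M.
Proof.
move=> [cpL cpK] her M L K f q LL [finj [fqex qsurj]] [N [a [b [LN qab]]]] X KX P.
move=> h hcoc.
have [F qF] := @pr_proj _ _ P 1 _ _ q h qsurj.
have ex : forall x, exists l, f l = F (pr_d P 1 x).
  move=> x; apply/fqex; rewrite qF; exact: hcoc.
pose G0 := fun x => proj1_sig (constructive_indefinite_description _ (ex x)).
have G0E : forall x, f (G0 x) = F (pr_d P 1 x).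
  move=> x; exact: (proj2_sig (constructive_indefinite_description _ (ex x))).
have G0lin : linear G0.
  move=> c x y; apply: finj; rewrite linearP !G0E !linearP //.
pose G := mkLin G0lin.
have Gcoc : forall x, G (pr_d P 2 x) = 0.
  move=> x; apply: finj; rewrite /= G0E d_comp !linear0 //.
have E2 := her 2%N isT X L KX LL P.
have [H GH] := E2 G Gcoc.
pose F' := mkLin (linear_sub F (mkLin (linear_comp H f))).
have F'coc : forall x, F' (pr_d P 1 x) = 0.
  move=> x; rewrite /= -GH /= G0E subrr //.
have qF' : forall x, q (F' x) = h x.
  move=> x; rewrite /= linearB /= qF.
  have -> : q (f (H x)) = 0 by apply/fqex; exists (H x).
  by rewrite subr0.
pose aF := mkLin (linear_comp F' a).
have E1 := (proj1 (cpL N) LN) X KX P.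
have aFcoc : forall x, aF (pr_d P 1 x) = 0.
  by move=> x; change (a (F' (pr_d P 1 x)) = 0); rewrite F'coc linear0.
have [g' ag] := E1 aF aFcoc.
exists (mkLin (linear_comp g' b)) => x /=.
by rewrite -qF' qab; change (b (aF x) = b (g' (pr_d P 0 x))); rewrite ag.
Qed.

End Aux.

Theorem corollary3p6 (R : nzRingType) (Kc Lc : mclass R) :
  cotorsion_pair Kc Lc -> complete_pair Kc Lc -> hereditary_pair Kc Lc ->
  (forall P : lmodType R, projective P -> Lc P) ->
  closed_ker_epi Lc ->
  forall M : lmodType R,
  [<-> Lc M;
       forall K : lmodType R, Kc K -> LHom_zero Lc K M;
       exists (L K : lmodType R) (f : {linear L -> K}) (q : {linear K -> M}),
         [/\ Lc L, Kc K, short_exact f q & factors_through_class Lc q]].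
Proof.
move=> cp comp her _ _ M; tfae.
- move=> LM K _ h; exists M, h, (@mkLin R M M _ (@linear_id R M)); split=> //.
- move=> H; have [[L [K [f [g [LL KK se]]]]] _] := comp M.
  by exists L, K, f, g; split=> //; apply: H.
- move=> [L [K [f [q [LL KK se fq]]]]].
  apply/(proj1 cp M) => X KX; exact: (@key R Kc Lc cp her M L K f q LL se fq X KX).
Qed.
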